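(* Let $a<b$ and let $f:[a,b]\rightarrow\mathbb{R}$ be a differentiable mapping in $(a,b)$ such that $f'\in L^1[a,b]$ and $\gamma\le f'(x)\le \Gamma$ for all $x\in [a,b]$, where $\gamma,\Gamma$ are real constants. Put $S=\frac{f(b)-f(a)}{b-a}$. Then for all $x\in[a,\frac{a+b}{2}]$, \[ \left|\frac{f(x)+f(a+b-x)}{2}-\frac{1}{b-a}\int_{a}^{b}f(t)\,dt\right|\leq \left[\frac{b-a}{4}+\left|x-\frac{3a+b}{4}\right|\right] (S-\gamma) \] and \[ \left|\frac{f(x)+f(a+b-x)}{2}-\frac{1}{b-a}\int_{a}^{b}f(t)\,dt\right|\leq \left[\frac{b-a}{4}+\left|x-\frac{3a+b}{4}\right|\right] (\Gamma-S). \] Moreover, if $\gamma=\inf_{t\in [a,b]}f'(t)$ and $\Gamma=\sup_{t\in [a,b]}f'(t)$, then the constant $\frac14$ (the coefficient of $b-a$ in the bracket) in each of these two inequalities is sharp, in the sense that it cannot be replaced by a smaller constant. *)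

(* Defs.v *)
From HB Require Import structures.
From mathcomp Require Import all_boot all_order all_algebra.
From mathcomp Require Import all_classical all_reals all_analysis.
Set Implicit Arguments. Unset Strict Implicit. Unset Printing Implicit Defensive.
Import Order.TTheory GRing.Theory Num.Theory.
Import numFieldNormedType.Exports.
Local Open Scope classical_set_scope.
Local Open Scope ring_scope.

Definition thm_hyp (R : realType) (a b : R) (f : R -> R) (gamma Gamma : R) : Prop :=
  [/\ a < b,
      {within `[a, b], continuous f},
      (forall x, a < x < b -> derivable f x 1),
      lebesgue_measure.-integrable `[a, b] (EFin \o (derive1 f)) &
      (forall x, a < x < b -> gamma <= (derive1 f) x <= Gamma)].

Definition slopeS (R : realType) (a b : R) (f : R -> R) : R := (f b - f a) / (b - a).

Definition devi (R : realType) (a b : R) (f : R -> R) (x : R) : R :=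
  `| (f x + f (a + b - x)) / 2 - (b - a)^-1 * Rintegral lebesgue_measure `[a, b] f |.

(* the bracket with the constant c in place of 1/4 *)
Definition brack (R : realType) (c a b x : R) : R :=
  c * (b - a) + `| x - (3 * a + b) / 4 |.

Definition infD (R : realType) (a b : R) (f : R -> R) : R :=
  inf [set (derive1 f) t | t in `]a, b[].
Definition supD (R : realType) (a b : R) (f : R -> R) : R :=
  sup [set (derive1 f) t | t in `]a, b[].

(* Main.v *)
Require Import Defs.
From HB Require Import structures.
From mathcomp Require Import all_boot all_order all_algebra.
From mathcomp Require Import all_classical all_reals all_analysis.
From mathcomp Require Import ring lra.
Import Order.TTheory GRing.Theory Num.Theory.
Import numFieldNormedType.Exports.
Local Open Scope classical_set_scope.
Local Open Scope ring_scope.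


Section S.
Context {R : realType}.
Notation mu := (@lebesgue_measure R).

Lemma cc_integrable (g : R -> R) u v : {within `[u,v], continuous g} ->
  mu.-integrable `[u,v] (EFin \o g).
Proof. by move=> cg; apply: continuous_compact_integrable => //; exact: segment_compact. Qed.

Lemma int_cst_cc (u v c : R) : u <= v ->
  \int[mu]_(t in `[u,v]) c = c * (v - u).
Proof.
move=> uv; rewrite Rintegral_cst //= lebesgue_measure_itv /= lte_fin.
case: ltgtP uv => // -> _.
by rewrite subrr mulr0.
Qed.

Lemma int_bound (g : R -> R) u v lo hi : u <= v ->
  {within `[u,v], continuous g} ->
  (forall t, u <= t <= v -> lo <= g t <= hi) ->
  lo * (v - u) <= \int[mu]_(t in `[u,v]) g t <= hi * (v - u).
Proof.
move=> uv cg gb.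
have ig := @cc_integrable g _ _ cg.
have ic : forall c : R, mu.-integrable `[u,v] (EFin \o (fun=> c)).
  by move=> c; apply: cc_integrable; apply: continuous_subspaceT => ?; exact: cvg_cst.
apply/andP; split.
- rewrite -int_cst_cc //; apply: le_Rintegral => //= t.
  by rewrite in_itv /= => /gb /andP[].
- rewrite -int_cst_cc //; apply: le_Rintegral => //= t.
  by rewrite in_itv /= => /gb /andP[].
Qed.

Lemma int_split (g : R -> R) a x b : a <= x -> x <= b ->
  {within `[a,b], continuous g} ->
  \int[mu]_(t in `[a,b]) g t = \int[mu]_(t in `[a,x]) g t + \int[mu]_(t in `[x,b]) g t.
Proof.
move=> ax xb cg.
have ig := @cc_integrable g _ _ cg.
have := @Rintegral_itvB R g (BLeft a) (BRight b) x ig.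
rewrite !bnd_simp => /(_ ax xb).
rewrite Rintegral_itv_obnd_cbnd; last first.
  by apply: integrableS ig => //; apply: subset_itvr; rewrite bnd_simp.
by move=> <-; rewrite addrC subrK.
Qed.

Lemma mono_bound (g : R -> R) a b x : a < b -> a <= x <= (a + b) / 2 ->
  {within `[a,b], continuous g} ->
  (forall u v, a <= u -> u <= v -> v <= b -> g u <= g v) ->
  `|(g x + g (a + b - x)) / 2 - (b - a)^-1 * \int[mu]_(t in `[a,b]) g t|
   <= (1 / 4 * (b - a) + `|x - (3 * a + b) / 4|) * ((g b - g a) / (b - a)).
Proof.
move=> ab /andP[ax xm] cg gm.
set y := a + b - x.
have xy : x <= y by rewrite /y; lra.
have yb : y <= b by rewrite /y; lra.
have xb : x <= b by lra.
have ay : a <= y by lra.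
have cxb : {within `[x,b], continuous g}.
  by apply: continuous_subspaceW cg; apply: subset_itvScc; rewrite bnd_simp.
have cax : {within `[a,x], continuous g}.
  by apply: continuous_subspaceW cg; apply: subset_itvScc; rewrite bnd_simp.
have cxy : {within `[x,y], continuous g}.
  by apply: continuous_subspaceW cxb; apply: subset_itvScc; rewrite bnd_simp.
have cyb : {within `[y,b], continuous g}.
  by apply: continuous_subspaceW cxb; apply: subset_itvScc; rewrite bnd_simp.
rewrite (@int_split g _ _ _ ax xb cg) (@int_split g _ _ _ xy yb cxb).
have gax : g a <= g x by apply: gm; lra.
have gxy : g x <= g y by apply: gm; lra.
have gyb : g y <= g b by apply: gm; lra.
set I1 := \int[mu]_(t in `[a,x]) g t.
set I2 := \int[mu]_(t in `[x,y]) g t.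
set I3 := \int[mu]_(t in `[y,b]) g t.
have /andP[I1l I1u] : g a * (x - a) <= I1 <= g x * (x - a).
  apply: int_bound => // t /andP[ht tx]; apply/andP; split; apply: gm; lra.
have /andP[I2l I2u] : g x * (y - x) <= I2 <= g y * (y - x).
  apply: int_bound => // t /andP[ht tx]; apply/andP; split; apply: gm; lra.
have /andP[I3l I3u] : g y * (b - y) <= I3 <= g b * (b - y).
  apply: int_bound => // t /andP[ht tx]; apply/andP; split; apply: gm; lra.
have L0 : 0 < b - a by lra.
set D := (b - a) * ((g x + g y) / 2) - (I1 + (I2 + I3)).
set B := 1 / 4 * (b - a) + `|x - (3 * a + b) / 4|.
have key : `|D| <= B * (g b - g a).
  rewrite /B /D; have [h|h] := lerP 0 (x - (3 * a + b) / 4).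
  - rewrite (ger0_norm h); apply/ler_normlP; split.
    + have h1 : 0 <= (y - x) / 2 * (g x - g a) by apply: mulr_ge0; rewrite /y; lra.
      have h2 : 0 <= (x - a - (y - x) / 2) * (g y - g a) by apply: mulr_ge0; rewrite /y; lra.
      rewrite /y in h1 h2 I1l I1u I2l I2u I3l I3u *; lra.
    + have h1 : 0 <= (y - x) / 2 * (g b - g y) by apply: mulr_ge0; rewrite /y; lra.
      have h2 : 0 <= (x - a - (y - x) / 2) * (g b - g x) by apply: mulr_ge0; rewrite /y; lra.
      rewrite /y in h1 h2 I1l I1u I2l I2u I3l I3u *; lra.
  - rewrite (ltr0_norm h); apply/ler_normlP; split.
    + have h1 : 0 <= (y - x) / 2 * (g x - g a) by apply: mulr_ge0; rewrite /y; lra.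
      have h2 : 0 <= ((y - x) / 2 - (x - a)) * (g b - g y) by apply: mulr_ge0; rewrite /y; lra.
      rewrite /y in h1 h2 I1l I1u I2l I2u I3l I3u *; lra.
    + have h1 : 0 <= (y - x) / 2 * (g b - g y) by apply: mulr_ge0; rewrite /y; lra.
      have h2 : 0 <= ((y - x) / 2 - (x - a)) * (g x - g a) by apply: mulr_ge0; rewrite /y; lra.
      rewrite /y in h1 h2 I1l I1u I2l I2u I3l I3u *; lra.
have -> : (g x + g y) / 2 - (b - a)^-1 * (I1 + (I2 + I3)) = D / (b - a).
  by rewrite /D; field; lra.
rewrite normrM normfV (gtr0_norm L0) mulrA ler_wpM2r //.
by rewrite invr_ge0; lra.
Qed.
Lemma int_pow (a b : R) n : a < b ->
  \int[mu]_(t in `[a,b]) (t^+n) = (b^+n.+1 - a^+n.+1) / n.+1%:R.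
Proof.
move=> ab.
pose F := fun t : R => (n.+1%:R)^-1 * t^+n.+1.
have dF : forall x, derivable F x 1.
  move=> x; apply: derivableM; first exact: derivable_cst.
  exact: exprn_derivable.
have cF : forall x, F @ x --> F x.
  move=> x; apply: differentiable_continuous; rewrite -derivable1_diffP; exact: dF.
rewrite /Rintegral (@continuous_FTC2 _ _ F).
- by rewrite /F /= -mulrBr mulrC.
- exact: ab.
- apply: continuous_subspaceT => x.
  apply: differentiable_continuous; rewrite -derivable1_diffP; exact: exprn_derivable.
- split.
  + by move=> x _; exact: dF.
  + exact: cvg_at_right_filter.
  + exact: cvg_at_left_filter.
- move=> x _; rewrite /F derive1Ml; last exact: exprn_derivable.
  rewrite derive1E exp_derive /= -[X in _ * X]/(_ * 1) mulr1 mulrA mulVf ?mul1r //.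
Qed.

Lemma cont_lin (f : R -> R) a b s k : {within `[a,b], continuous f} ->
  {within `[a,b], continuous (fun t => s * f t - k * t)}.
Proof.
move=> cf.
have cl : {within `[a,b], continuous (fun t : R => k * t)}.
  apply: continuous_subspaceT => z; apply: cvgM; [exact: cvg_cst| exact: cvg_id].
have cs : {within `[a,b], continuous (fun t : R => s)}.
  by apply: continuous_subspaceT => z; exact: cvg_cst.
move=> z; apply: cvgB; last exact: cl.
apply: cvgM; [exact: cs | exact: cf].
Qed.

Lemma lin_devi (f : R -> R) a b x s k : a < b -> {within `[a,b], continuous f} ->
  let g := fun t => s * f t - k * t in
  (g x + g (a + b - x)) / 2 - (b - a)^-1 * \int[mu]_(t in `[a,b]) g t =
  s * ((f x + f (a + b - x)) / 2 - (b - a)^-1 * \int[mu]_(t in `[a,b]) f t).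
Proof.
move=> ab cf g.
have i1 := @cc_integrable f _ _ cf.
have cl : {within `[a,b], continuous (fun t : R => t)}.
  by apply: continuous_subspaceT => z; exact: cvg_id.
have i2 := @cc_integrable (fun t : R => t) _ _ cl.
rewrite /g RintegralB //; last 2 first.
- apply: (@cc_integrable (fun t => s * f t)) => z; apply: cvgM; last exact: cf.
  by apply: (continuous_subspaceT (fun=> cvg_cst s)).
- by apply: (@cc_integrable (fun t => k * t)); apply: continuous_subspaceT => z;
     apply: cvgM; [exact: cvg_cst| exact: cvg_id].
rewrite RintegralZl // RintegralZl //.
have -> : \int[mu]_(t in `[a, b]) t = \int[mu]_(t in `[a, b]) t ^+ 1.
  by apply: eq_Rintegral => t _; rewrite expr1.
rewrite int_pow //.
have L0 : b - a != 0 by rewrite subr_eq0 gt_eqF.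
rewrite !expr2 /=; field.
by rewrite L0.
Qed.
End S.


Lemma part1_gen (R : realType) (a b : R) (f : R -> R) (s k : R) :
  a < b -> {within `[a, b], continuous f} ->
  (forall x, a < x < b -> derivable f x 1) ->
  (forall x, a < x < b -> k <= s * (derive1 f) x) ->
  s ^+ 2 = 1 ->
  forall x, a <= x <= (a + b) / 2 ->
   devi a b f x <= brack (1 / 4) a b x * (s * slopeS a b f - k).
Proof.
move=> ab cf df bnd s2 x xab.
pose g := fun t => s * f t - k * t.
have cg : {within `[a,b], continuous g} by exact: cont_lin.
have gm : forall u v, a <= u -> u <= v -> v <= b -> g u <= g v.
  move=> u v au uv vb; move: uv; rewrite le_eqVlt => /predU1P[-> //|uv].
  have cuv : {within `[u,v], continuous f}.
    by apply: continuous_subspaceW cf; apply: subset_itvScc; rewrite bnd_simp.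
  have hd : forall z, z \in `]u,v[ -> is_derive z 1 f (derive1 f z).
    move=> z; rewrite in_itv /= => /andP[uz zv].
    rewrite derive1E; apply: derivableP; apply: df; apply/andP; split; lra.
  have [c cuv' ec] := @MVT R f (derive1 f) u v uv hd cuv.
  move: cuv'; rewrite in_itv /= => /andP[uc cv].
  have hc := bnd c ltac:(apply/andP; split; lra).
  rewrite /g -subr_ge0.
  have -> : s * f v - k * v - (s * f u - k * u) = (s * derive1 f c - k) * (v - u).
    have e2 : s * (f v - f u) = s * (derive1 f c * (v - u)) by rewrite ec.
    lra.
  by apply: mulr_ge0; lra.
have := @mono_bound R g a b x ab xab cg gm.
rewrite (@lin_devi R f a b x s k ab cf).
have hs : `|s| = 1.
  by apply/eqP; rewrite -(@eqrXn2 _ 2) // ?normr_ge0 // real_normK ?s2 ?expr1n // num_real.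
rewrite normrM hs mul1r /devi /brack /slopeS.
have -> : (g b - g a) / (b - a) = s * ((f b - f a) / (b - a)) - k.
  rewrite /g; field; rewrite subr_eq0 gt_eqF //.
by rewrite mul1r.
Qed.


Section Ex.
Context {R : realType}.
Variables (k : R) (n : nat).
Hypothesis k2 : `|k| = 1.
Hypothesis n2 : (2 <= n)%N.
Let f := fun t : R => k * t ^+ n.

Lemma ex_der t : derive1 f t = k * (n%:R * t ^+ n.-1).
Proof.
rewrite /f derive1Ml; last exact: exprn_derivable.
by rewrite derive1E exp_derive /= -[X in _ * X]/(_ * 1) mulr1.
Qed.

Lemma ex_derivable t : derivable f t 1.
Proof. by apply: derivableM; [exact: derivable_cst | exact: exprn_derivable]. Qed.

Lemma ex_dbound t : 0 < t < 1 -> `|derive1 f t| <= n%:R.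
Proof.
move=> /andP[t0 t1]; rewrite ex_der normrM k2 mul1r normrM.
rewrite (@ger0_norm _ n%:R) // ler_piMr // normrX exprn_ile1 //.
by rewrite ger0_norm ltW.
Qed.

Lemma ex_int : \int[lebesgue_measure]_(t in `[0, 1]) f t = k / n.+1%:R.
Proof.
rewrite /f RintegralZl //; last first.
  apply: cc_integrable; apply: derivable_within_continuous => z _.
  exact: exprn_derivable.
by rewrite int_pow ?ltr01 // expr1n expr0n /= subr0 mul1r.
Qed.

Lemma ex_devi : devi 0 1 f 0 = 2^-1 - n.+1%:R^-1.
Proof.
rewrite /devi ex_int /f subr0 add0r expr1n expr0n /=.
have -> : (n == 0)%N = false by case: n n2.
rewrite mulr0 add0r mulr1 subr0 invr1 mul1r.
rewrite -mulrBr normrM k2 mul1r ger0_norm //.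
rewrite subr_ge0 lef_pV2 ?posrE ?ltr0n //.
by rewrite (ler_nat _ 2 n.+1) ltnW.
Qed.

Lemma ex_slope : slopeS 0 1 f = k.
Proof.
rewrite /slopeS /f expr1n expr0n /=.
have -> : (n == 0)%N = false by case: n n2.
by rewrite mulr0 mulr1 !subr0 invr1 mulr1.
Qed.

Lemma ex_mvt : exists2 t : R, 0 < t < 1 & derive1 f t = k.
Proof.
have hd : forall z : R, z \in `]0, 1[ -> is_derive z 1 f (derive1 f z).
  by move=> z _; rewrite derive1E; apply: derivableP; exact: ex_derivable.
have cf : {within `[0, 1], continuous f}.
  by apply: derivable_within_continuous => z _; exact: ex_derivable.
have [c] := @MVT R f (derive1 f) 0 1 ltr01 hd cf.
rewrite in_itv /= => c01 e; exists c => //.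
move: e; rewrite subr0 mulr1 /f expr1n expr0n /=.
have -> : (n == 0)%N = false by case: n n2.
by rewrite mulr0 subr0 mulr1 => <-.
Qed.

Let A := [set derive1 f t | t in `]0, 1[].

Lemma ex_A0 : A !=set0.
Proof.
have [t t01 _] := ex_mvt; exists (derive1 f t); exists t => //.
Qed.

Lemma ex_lb : has_lbound A.
Proof.
exists (- n%:R) => y [t tin <-]; move: tin; rewrite /= in_itv /=.
by move=> h; have := ex_dbound t h; rewrite ler_norml => /andP[].
Qed.

Lemma ex_ub : has_ubound A.
Proof.
exists (n%:R) => y [t tin <-]; move: tin; rewrite /= in_itv /=.
by move=> h; have := ex_dbound t h; rewrite ler_norml => /andP[].
Qed.

Lemma ex_hyp : thm_hyp 0 1 f (infD 0 1 f) (supD 0 1 f).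
Proof.
split.
- exact: ltr01.
- by apply: derivable_within_continuous => z _; exact: ex_derivable.
- by move=> z _; exact: ex_derivable.
- have -> : derive1 f = fun t => k * (n%:R * t ^+ n.-1).
    by apply/funext => t; exact: ex_der.
  apply: cc_integrable; apply: derivable_within_continuous => z _.
  apply: derivableM; first exact: derivable_cst.
  apply: derivableM; first exact: derivable_cst.
  exact: exprn_derivable.
- move=> t t01; apply/andP; split.
  + apply: (ge_inf ex_lb); exists t => //; by rewrite /= in_itv.
  + apply: (ub_le_sup ex_ub); exists t => //; by rewrite /= in_itv.
Qed.

Lemma ex_inf_le : infD 0 1 f <= k.
Proof.
have [t t01 e] := ex_mvt; rewrite -e.
apply: (ge_inf ex_lb); exists t => //; by rewrite /= in_itv.
Qed.

Lemma ex_sup_ge : k <= supD 0 1 f.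
Proof.
have [t t01 e] := ex_mvt; rewrite -e.
apply: (ub_le_sup ex_ub); exists t => //; by rewrite /= in_itv.
Qed.

End Ex.


Theorem theorem2p1 (R : realType) :
  (forall (a b : R) (f : R -> R) (gamma Gamma : R),
     thm_hyp a b f gamma Gamma ->
     forall x, a <= x <= (a + b) / 2 ->
       devi a b f x <= brack (1 / 4) a b x * (slopeS a b f - gamma) /\
       devi a b f x <= brack (1 / 4) a b x * (Gamma - slopeS a b f)) /\
  (forall c : R, c < 1 / 4 ->
     (exists (a b : R) (f : R -> R) (x : R),
        thm_hyp a b f (infD a b f) (supD a b f) /\ a <= x <= (a + b) / 2 /\
        brack c a b x * (slopeS a b f - infD a b f) < devi a b f x) /\
     (exists (a b : R) (f : R -> R) (x : R),
        thm_hyp a b f (infD a b f) (supD a b f) /\ a <= x <= (a + b) / 2 /\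
        brack c a b x * (supD a b f - slopeS a b f) < devi a b f x)).
Proof.
split.
  move=> a b f gamma Gamma [ab cf df _ bnd] x xab; split.
  - have h := @part1_gen R a b f 1 gamma ab cf df.
    have e : slopeS a b f - gamma = 1 * slopeS a b f - gamma by ring.
    rewrite e; apply: h => //.
    + by move=> z /bnd /andP[h _]; rewrite mul1r.
    + exact: expr1n.
  - have h := @part1_gen R a b f (-1) (- Gamma) ab cf df.
    have e : Gamma - slopeS a b f = -1 * slopeS a b f - - Gamma by ring.
    rewrite e; apply: h => //.
    + by move=> z /bnd /andP[_ h]; lra.
    + by rewrite sqrrN expr1n.
move=> c c4.
set n := (Num.truncn ((1 / 4 - c)^-1)).+2.
have n2 : (2 <= n)%N by [].
have hn : n.+1%:R^-1 < 1 / 4 - c.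
  have X0 : 0 < 1 / 4 - c by lra.
  have h1 := truncnS_gt ((1 / 4 - c)^-1).
  have h2 : (Num.truncn ((1 / 4 - c)^-1)).+1%:R <= n.+1%:R :> R.
    by rewrite ler_nat /n ltnS (leq_trans (leqnSn _) (leqnSn _)).
  rewrite -[X in _ < X]invrK ltf_pV2 ?posrE ?invr_gt0 ?ltr0n //.
  exact: lt_le_trans h1 h2.
have hb : brack c 0 1 0 = c + 1 / 4.
  rewrite /brack subr0 mulr1 mulr0 add0r add0r normrN ger0_norm //; lra.
have hd0 : 0 < 2^-1 - n.+1%:R^-1 :> R.
  rewrite subr_gt0 ltf_pV2 ?posrE ?ltr0n //.
  by rewrite ltr_nat.
have x0 : (0:R) <= (0:R) <= ((0:R) + 1) / 2.
  by rewrite lexx /= add0r mul1r invr_ge0.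
split.
- exists 0, 1, (fun t => 1 * t ^+ n), 0; split; last split => //.
    by apply: ex_hyp; rewrite normr1.
  rewrite ex_slope ?normr1 // ex_devi ?normr1 // hb.
  have i1 : infD 0 1 (fun t : R => 1 * t ^+ n) <= 1 by apply: ex_inf_le; rewrite ?normr1.
  have i0 : 0 <= infD 0 1 (fun t : R => 1 * t ^+ n).
    apply: lb_le_inf; first exact: ex_A0.
    move=> y [t]; rewrite /= in_itv /= => /andP[t0 t1] <-.
    rewrite ex_der ?normr1 // mul1r; apply: mulr_ge0 => //.
    by apply: exprn_ge0; exact: ltW.
  set I := infD _ _ _ in i1 i0 *; set N := n.+1%:R^-1 in hn hd0 *.
  have [hc|hc] := lerP 0 (c + 1 / 4).
    have h : 0 <= (c + 1 / 4) * I by apply: mulr_ge0.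
    lra.
  have h : 0 <= - (c + 1 / 4) * (1 - I) by apply: mulr_ge0; lra.
  lra.
- exists 0, 1, (fun t => -1 * t ^+ n), 0; split; last split => //.
    by apply: ex_hyp; rewrite normrN normr1.
  rewrite ex_slope ?normrN ?normr1 // ex_devi ?normrN ?normr1 // hb.
  have i1 : -1 <= supD 0 1 (fun t : R => -1 * t ^+ n) by apply: ex_sup_ge; rewrite ?normrN ?normr1.
  have i0 : supD 0 1 (fun t : R => -1 * t ^+ n) <= 0.
    apply: ge_sup; first exact: ex_A0.
    move=> y [t]; rewrite /= in_itv /= => /andP[t0 t1] <-.
    rewrite ex_der ?normrN ?normr1 // mulN1r oppr_le0; apply: mulr_ge0 => //.
    by apply: exprn_ge0; exact: ltW.
  set I := supD _ _ _ in i1 i0 *; set N := n.+1%:R^-1 in hn hd0 *.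
  have [hc|hc] := lerP 0 (c + 1 / 4).
    have h : 0 <= (c + 1 / 4) * - I by apply: mulr_ge0; lra.
    lra.
  have h : 0 <= - (c + 1 / 4) * (I + 1) by apply: mulr_ge0; lra.
  lra.
Qed.
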